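(* Let $n\ge p$, $\nu>0$, $\boldsymbol\eta\in\mathbb R^p$ with $\max_j\eta_j<1$, and $\boldsymbol d\sim$ IMDY$(\nu,\boldsymbol\eta)$. Fix $d_2,\dots,d_p$, let $g_1(d_1)=\exp(\nu\eta_1d_1)/\left[{}_0F_1\!\left(\tfrac n2,\tfrac{D^2}{4}\right)\right]^\nu$ be the unnormalized conditional density of $d_1$ given $(d_2,\dots,d_p)$, and let $m$ be its mode. If $\epsilon>0$ and $B>m$ satisfy $g_1(B)/g_1(m)<\epsilon$, then $P(d_1>B\mid d_2,\dots,d_p)<\epsilon$.
   Context: $D=\mathrm{diag}(d_1,\dots,d_p)$; $\mathcal V_{n,p}=\{X\in\mathbb R^{n\times p}:X^TX=I_p\}$ with normalized Haar probability measure $[dX]$; ${}_0F_1\!\left(\tfrac n2,\tfrac{D^2}{4}\right)=\int_{\mathcal V_{n,p}}\exp\big(\sum_j d_jX_{jj}\big)[dX]$. IMDY$(\nu,\boldsymbol\eta)$ is the distribution on $\mathbb R_+^p$ with Lebesgue density proportional to $\exp(\nu\boldsymbol\eta^T\boldsymbol d)/[{}_0F_1(\tfrac n2,\tfrac{D^2}4)]^\nu$. *)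

(* Defs.v *)
From Stdlib Require Import Reals.
Open Scope R_scope.

(* Real matrices as functions of (row, column), 0-based indices. *)
Definition Mat := nat -> nat -> R.

Fixpoint rsum (k : nat) (f : nat -> R) : R :=
  match k with O => 0 | S k' => rsum k' f + f k' end.

Definition mmul (n : nat) (Q X : Mat) : Mat :=
  fun i j => rsum n (fun k => Q i k * X k j).

Definition stiefel (n p : nat) (X : Mat) : Prop :=
  forall i j, (i < p)%nat -> (j < p)%nat ->
    rsum n (fun k => X k i * X k j) = if Nat.eqb i j then 1 else 0.

Definition orthogonal (n : nat) (Q : Mat) : Prop := stiefel n n Q.

Definition cont_on_stiefel (n p : nat) (f : Mat -> R) : Prop :=
  forall X, stiefel n p X -> forall eps, 0 < eps -> exists delta, 0 < delta /\
    forall Y, stiefel n p Y ->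
      (forall i j, (i < n)%nat -> (j < p)%nat -> Rabs (Y i j - X i j) < delta) ->
      Rabs (f Y - f X) < eps.

(* I is integration against the normalized Haar (O(n)-invariant) probability
   measure [dX] on V_{n,p}, as a functional on continuous functions: a positive,
   linear, normalized, left-O(n)-invariant functional.  By the Riesz
   representation theorem and uniqueness of the invariant probability measure on
   the homogeneous space V_{n,p} (p <= n), such an I is exactly f |-> \int f [dX]
   on continuous f. *)
Definition is_haar_integral (n p : nat) (I : (Mat -> R) -> R) : Prop :=
  (forall f g a, cont_on_stiefel n p f -> cont_on_stiefel n p g ->
     I (fun X => a * f X + g X) = a * I f + I g) /\
  (forall f, cont_on_stiefel n p f ->
     (forall X, stiefel n p X -> 0 <= f X) -> 0 <= I f) /\
  I (fun _ => 1) = 1 /\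
  (forall f Q, cont_on_stiefel n p f -> orthogonal n Q ->
     I (fun X => f (mmul n Q X)) = I f).

(* 0F1(n/2, D^2/4) = \int_{V_{n,p}} exp(sum_j d_j X_jj) [dX] *)
Definition hyp0F1 (n p : nat) (I : (Mat -> R) -> R) (d : nat -> R) : R :=
  I (fun X => exp (rsum p (fun j => d j * X j j))).

(* d with its first coordinate d_1 (index 0) replaced by x *)
Definition upd1 (d : nat -> R) (x : R) : nat -> R :=
  fun j => match j with O => x | _ => d j end.

Definition g1 (n p : nat) (I : (Mat -> R) -> R) (nu : R) (eta d : nat -> R)
  (x : R) : R :=
  exp (nu * eta O * x) / Rpower (hyp0F1 n p I (upd1 d x)) nu.

Definition improper_int (f : R -> R) (a l : R) : Prop :=
  exists pr : (forall b, a <= b -> Riemann_integrable f a b),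
    forall eps, 0 < eps -> exists M, forall b (h : a <= b), M <= b ->
      Rabs (RiemannInt (pr b h) - l) < eps.

(* Main.v *)
Require Import Defs.
From Stdlib Require Import Reals.
From Stdlib Require Import Lra Lia Psatz ZArith FunctionalExtensionality Classical_Prop.
From Coquelicot Require Import Coquelicot.
Open Scope R_scope.


Lemma rsum_ext k f g : (forall i, (i < k)%nat -> f i = g i) -> rsum k f = rsum k g.
Proof. induction k; simpl; intros H; auto. rewrite IHk; [f_equal; apply H; lia| intros; apply H; lia]. Qed.

Lemma rsum_plus k f g : rsum k (fun i => f i + g i) = rsum k f + rsum k g.
Proof. induction k; simpl; [ring|rewrite IHk; ring]. Qed.

Lemma rsum_scal k a f : rsum k (fun i => a * f i) = a * rsum k f.
Proof. induction k; simpl; [ring|rewrite IHk; ring]. Qed.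

Lemma rsum_nonneg k f : (forall i, (i<k)%nat -> 0 <= f i) -> 0 <= rsum k f.
Proof. induction k; simpl; intros H; [lra|]. assert (0 <= f k) by (apply H; lia).
  assert (0 <= rsum k f) by (apply IHk; intros; apply H; lia). lra. Qed.

Lemma rsum_le_term k f i : (forall i, (i<k)%nat -> 0 <= f i) -> (i < k)%nat -> f i <= rsum k f.
Proof. induction k; simpl; intros H Hi; [lia|].
  assert (0 <= f k) by (apply H; lia).
  assert (0 <= rsum k f) by (apply rsum_nonneg; intros; apply H; lia).
  destruct (Nat.eq_dec i k). subst; lra.
  assert (f i <= rsum k f) by (apply IHk; [intros; apply H; lia|lia]). lra. Qed.

Lemma rsum_zero k f : (forall i, (i<k)%nat -> f i = 0) -> rsum k f = 0.
Proof. induction k; simpl; intros H; auto. rewrite IHk, H; [ring|lia|intros; apply H; lia]. Qed.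

Lemma rsum_one k f a : (a < k)%nat -> (forall i, (i<k)%nat -> i <> a -> f i = 0) -> rsum k f = f a.
Proof. induction k; simpl; intros Ha H; [lia|].
  destruct (Nat.eq_dec a k). subst. rewrite rsum_zero; [ring|intros; apply H; lia].
  rewrite IHk, (H k); [ring|lia|lia|lia|intros; apply H; lia]. Qed.

Lemma rsum_two k f a b : (a < k)%nat -> (b < k)%nat -> a <> b ->
  (forall i, (i<k)%nat -> i <> a -> i <> b -> f i = 0) -> rsum k f = f a + f b.
Proof. induction k; simpl; intros Ha Hb Hab H; [lia|].
  destruct (Nat.eq_dec a k). subst. rewrite (rsum_one k f b); [ring|lia|intros; apply H; lia].
  destruct (Nat.eq_dec b k). subst. rewrite (rsum_one k f a); [ring|lia|intros; apply H; lia].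
  rewrite IHk, (H k); [ring|lia|lia|lia|lia|lia|lia|intros; apply H; lia]. Qed.

Lemma rsum_abs k f : Rabs (rsum k f) <= rsum k (fun i => Rabs (f i)).
Proof. induction k; simpl. rewrite Rabs_R0; lra.
  eapply Rle_trans; [apply Rabs_triang|lra]. Qed.

Lemma stiefel_bound n p X i j : stiefel n p X -> (i < n)%nat -> (j < p)%nat -> Rabs (X i j) <= 1.
Proof. intros H Hi Hj. specialize (H j j Hj Hj). rewrite Nat.eqb_refl in H.
  assert (X i j * X i j <= 1).
  { rewrite <- H. apply (rsum_le_term n (fun k => X k j * X k j)); auto.
    intros; nra. }
  apply Rabs_le; split; nra. Qed.

Lemma cont_eps g x : continuity_pt g x -> forall eps, 0 < eps ->
  exists delta, 0 < delta /\ forall y, Rabs (y - x) < delta -> Rabs (g y - g x) < eps.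
Proof. intros H eps He.
  unfold continuity_pt, continue_in, limit1_in, limit_in in H.
  destruct (H eps He) as [d [Hd Hy]]. exists d; split; auto. intros y Hyx.
  destruct (Req_dec y x). subst. unfold Rminus; rewrite Rplus_opp_r, Rabs_R0; auto.
  apply Hy. split. split; auto. exact I. simpl. unfold R_dist; auto. Qed.

Lemma cpt_of_derive g x : ex_derive g x -> continuity_pt g x.
Proof. intros H. apply continuity_pt_filterlim. exact (@ex_derive_continuous R_AbsRing R_NormedModule g x H). Qed.

Definition cs n p f := cont_on_stiefel n p f.

Lemma cs_const n p c : cs n p (fun _ => c).
Proof. intros X _ eps He. exists 1; split; [lra|]. intros. unfold Rminus; rewrite Rplus_opp_r, Rabs_R0; auto. Qed.

Lemma cs_entry n p i j : (i < n)%nat -> (j < p)%nat -> cs n p (fun X => X i j).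
Proof. intros Hi Hj X _ eps He. exists eps; split; auto. Qed.

Lemma cs_plus n p f g : cs n p f -> cs n p g -> cs n p (fun X => f X + g X).
Proof. intros Hf Hg X HX eps He.
  destruct (Hf X HX (eps/2)) as [d1 [Hd1 H1]]; [lra|].
  destruct (Hg X HX (eps/2)) as [d2 [Hd2 H2]]; [lra|].
  exists (Rmin d1 d2); split. apply Rmin_pos; auto.
  intros Y HY Hc.
  assert (A := H1 Y HY (fun i j Hi Hj => Rlt_le_trans _ _ _ (Hc i j Hi Hj) (Rmin_l _ _))).
  assert (B := H2 Y HY (fun i j Hi Hj => Rlt_le_trans _ _ _ (Hc i j Hi Hj) (Rmin_r _ _))).
  replace (f Y + g Y - (f X + g X)) with ((f Y - f X) + (g Y - g X)) by ring.
  eapply Rle_lt_trans; [apply Rabs_triang|lra]. Qed.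

Lemma cs_comp n p g f : cs n p f -> (forall X, stiefel n p X -> continuity_pt g (f X)) ->
  cs n p (fun X => g (f X)).
Proof. intros Hf Hg X HX eps He.
  destruct (cont_eps _ _ (Hg X HX) eps He) as [d1 [Hd1 H1]].
  destruct (Hf X HX d1 Hd1) as [d [Hd H]].
  exists d; split; [exact Hd|]. intros Y HY Hc. apply H1. apply H; auto. Qed.

Lemma cs_rsum n p k (F : nat -> Mat -> R) : (forall i, (i<k)%nat -> cs n p (F i)) ->
  cs n p (fun X => rsum k (fun i => F i X)).
Proof. induction k; simpl; intros H. apply cs_const.
  apply (cs_plus n p (fun X => rsum k (fun i => F i X)) (F k)).
  apply IHk; intros; apply H; lia. apply H; lia. Qed.

Lemma cs_scal n p a f : cs n p f -> cs n p (fun X => a * f X).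
Proof. intros H. apply (cs_comp n p (fun y => a * y) f H). intros.
  apply cpt_of_derive. auto_derive; auto. Qed.

Lemma cs_exp n p f : cs n p f -> cs n p (fun X => exp (f X)).
Proof. intros H. apply (cs_comp n p exp f H). intros.
  apply cpt_of_derive. auto_derive; auto. Qed.

Lemma cs_sqr n p f : cs n p f -> cs n p (fun X => f X * f X).
Proof. intros H. apply (cs_comp n p (fun y => y * y) f H). intros.
  apply cpt_of_derive. auto_derive; auto. Qed.

Section Haar.
Variables (n p : nat) (I : (Mat -> R) -> R).
Hypothesis Hh : is_haar_integral n p I.

Lemma I_add f g : cs n p f -> cs n p g -> I (fun X => f X + g X) = I f + I g.
Proof. intros Hf Hg. destruct Hh as [L _].
  rewrite <- (Rmult_1_l (I f)), <- L; auto. f_equal. extensionality X. ring. Qed.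

Lemma I_zero : I (fun _ => 0) = 0.
Proof. assert (H := I_add (fun _ => 0) (fun _ => 0) (cs_const n p 0) (cs_const n p 0)).
  simpl in H. replace (fun _ : Mat => 0 + 0) with (fun _ : Mat => 0) in H
    by (extensionality X; ring). lra. Qed.

Lemma I_scal a f : cs n p f -> I (fun X => a * f X) = a * I f.
Proof. intros Hf. destruct Hh as [L _].
  assert (H := L f (fun _ => 0) a Hf (cs_const n p 0)). rewrite I_zero in H.
  replace (fun X => a * f X + 0) with (fun X => a * f X) in H by (extensionality X; ring).
  lra. Qed.

Lemma I_const c : I (fun _ => c) = c.
Proof. destruct Hh as [_ [_ [H1 _]]].
  assert (H := I_scal c (fun _ => 1) (cs_const n p 1)). cbv beta in H.
  replace (fun _ : Mat => c * 1) with (fun _ : Mat => c) in H by (extensionality X; ring).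
  rewrite H, H1; ring. Qed.

Lemma I_mono f g : cs n p f -> cs n p g -> (forall X, stiefel n p X -> f X <= g X) -> I f <= I g.
Proof. intros Hf Hg H. destruct Hh as [L [P _]].
  assert (A := L f g (-1) Hf Hg).
  assert (B : 0 <= I (fun X => -1 * f X + g X)).
  { apply P. apply cs_plus; auto. apply cs_scal; auto. intros X HX. specialize (H X HX); lra. }
  lra. Qed.

Lemma I_rsum k (F : nat -> Mat -> R) : (forall i, (i<k)%nat -> cs n p (F i)) ->
  I (fun X => rsum k (fun i => F i X)) = rsum k (fun i => I (F i)).
Proof. induction k; simpl; intros H. apply I_zero.
  assert (A : cs n p (fun X => rsum k (fun i => F i X))) by (apply cs_rsum; intros; apply H; lia).
  assert (B : cs n p (F k)) by (apply H; lia).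
  rewrite (I_add (fun X => rsum k (fun i => F i X)) (F k) A B).
  rewrite IHk; auto. Qed.

Lemma I_inv f Q : cs n p f -> orthogonal n Q -> I (fun X => f (mmul n Q X)) = I f.
Proof. destruct Hh as [_ [_ [_ H]]]. auto. Qed.
End Haar.

Lemma exp_le_inc x y : x <= y -> exp x <= exp y.
Proof. intros [H|H]. left; apply exp_increasing; auto. subst; lra. Qed.
Lemma exp_le_inv x y : exp x <= exp y -> x <= y.
Proof. intros [H|H]. left; apply exp_lt_inv; auto. apply exp_inv in H; lra. Qed.
Lemma ln_le x y : 0 < x -> x <= y -> ln x <= ln y.
Proof. intros Hx [H|H]. left; apply ln_increasing; auto. subst; lra. Qed.

Lemma rsum_le k f g : (forall i, (i<k)%nat -> f i <= g i) -> rsum k f <= rsum k g.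
Proof. induction k; simpl; intros H; [lra|].
  assert (f k <= g k) by (apply H; lia). assert (rsum k f <= rsum k g) by (apply IHk; intros; apply H; lia). lra. Qed.

Lemma exp_convex t a b : 0 <= t <= 1 -> exp (t * a + (1 - t) * b) <= t * exp a + (1 - t) * exp b.
Proof. intros Ht. set (m := t * a + (1 - t) * b).
  assert (Ea : exp a = exp m * exp (a - m)) by (rewrite <- exp_plus; f_equal; ring).
  assert (Eb : exp b = exp m * exp (b - m)) by (rewrite <- exp_plus; f_equal; ring).
  assert (1 + (a - m) <= exp (a - m)) by apply exp_ineq1_le.
  assert (1 + (b - m) <= exp (b - m)) by apply exp_ineq1_le.
  assert (0 < exp m) by apply exp_pos.
  rewrite Ea, Eb.
  assert (t * (exp m * (1 + (a - m))) + (1 - t) * (exp m * (1 + (b - m))) = exp m)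
    by (unfold m; ring).
  assert (t * (exp m * (1 + (a - m))) <= t * (exp m * exp (a - m))) by
   (apply Rmult_le_compat_l; [lra|apply Rmult_le_compat_l; lra]).
  assert ((1-t) * (exp m * (1 + (b - m))) <= (1-t) * (exp m * exp (b - m))) by
   (apply Rmult_le_compat_l; [lra|apply Rmult_le_compat_l; lra]).
  lra. Qed.

Lemma lip_cont f x L : 0 < L -> (forall y, Rabs (f y - f x) <= L * Rabs (y - x)) -> continuity_pt f x.
Proof. intros HL H. unfold continuity_pt, continue_in, limit1_in, limit_in.
  intros eps He. exists (eps / L); split. apply Rdiv_lt_0_compat; auto.
  intros y [_ Hy]. simpl in *. unfold R_dist in *. eapply Rle_lt_trans; [apply H|].
  apply Rmult_lt_reg_l with (/ L). apply Rinv_0_lt_compat; auto.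
  replace (/ L * (L * Rabs (y - x))) with (Rabs (y - x)) by (field; lra).
  replace (/ L * eps) with (eps / L) by (field; lra). auto. Qed.

Section FF.
Variables (n p : nat) (I : (Mat -> R) -> R) (d : nat -> R).
Hypothesis Hh : is_haar_integral n p I.
Hypothesis Hp1 : (1 <= p)%nat.
Hypothesis Hpn : (p <= n)%nat.

Definition cc (X : Mat) := rsum p (fun j => upd1 d 0 j * X j j).
Definition EE (x : R) (X : Mat) := exp (x * X 0%nat 0%nat + cc X).
Definition FF (x : R) := I (EE x).
Definition KK := rsum p (fun j => Rabs (upd1 d 0 j)).

Lemma rsum_upd x X k : rsum (S k) (fun j => upd1 d x j * X j j) =
  x * X 0%nat 0%nat + rsum (S k) (fun j => upd1 d 0 j * X j j).
Proof. induction k. simpl. ring. change (rsum (S (S k)) ?f) with (rsum (S k) f + f (S k)).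
  rewrite IHk. simpl upd1. ring. Qed.

Lemma hyp_FF x : hyp0F1 n p I (upd1 d x) = FF x.
Proof. unfold hyp0F1, FF, EE, cc. f_equal. extensionality X. f_equal.
  destruct p as [|q]; [lia|]. apply rsum_upd. Qed.

Lemma cs_cc : cs n p cc.
Proof. unfold cc. apply (cs_rsum n p p (fun j X => upd1 d 0 j * X j j)).
  intros i Hi. apply cs_scal. apply cs_entry; lia. Qed.

Lemma cs_EE x : cs n p (EE x).
Proof. unfold EE. apply cs_exp. apply (cs_plus n p (fun X => x * X 0%nat 0%nat) cc).
  apply cs_scal. apply cs_entry; lia. apply cs_cc. Qed.

Lemma cc_bound X : stiefel n p X -> Rabs (cc X) <= KK.
Proof. intros HX. unfold cc, KK. eapply Rle_trans; [apply rsum_abs|].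
  apply rsum_le. intros i Hi. rewrite Rabs_mult.
  assert (Rabs (X i i) <= 1) by (apply (stiefel_bound n p); auto; lia).
  assert (0 <= Rabs (upd1 d 0 i)) by apply Rabs_pos.
  assert (0 <= Rabs (X i i)) by apply Rabs_pos. nra. Qed.

Lemma X00_bound X : stiefel n p X -> Rabs (X 0%nat 0%nat) <= 1.
Proof. intros HX. apply (stiefel_bound n p); auto; lia. Qed.

Lemma FF_pos x : 0 < FF x.
Proof. apply Rlt_le_trans with (exp (- Rabs x - KK)). apply exp_pos.
  rewrite <- (I_const n p I Hh (exp (- Rabs x - KK))).
  apply (I_mono n p I Hh). apply cs_const. apply cs_EE.
  intros X HX. unfold EE. apply exp_le_inc.
  assert (A := cc_bound X HX). assert (B := X00_bound X HX).
  apply Rabs_le_between in A. assert (Rabs (x * X 0%nat 0%nat) <= Rabs x).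
  { rewrite Rabs_mult. assert (0 <= Rabs x) by apply Rabs_pos. nra. }
  apply Rabs_le_between in H. lra. Qed.

Lemma FF_lip x y : FF y <= exp (Rabs (y - x)) * FF x.
Proof. unfold FF. rewrite <- (I_scal n p I Hh); [|apply cs_EE].
  apply (I_mono n p I Hh). apply cs_EE. apply cs_scal, cs_EE.
  intros X HX. unfold EE. rewrite <- exp_plus. apply exp_le_inc.
  assert (B := X00_bound X HX).
  assert (Rabs ((y - x) * X 0%nat 0%nat) <= Rabs (y - x)).
  { rewrite Rabs_mult. assert (0 <= Rabs (y-x)) by apply Rabs_pos. nra. }
  apply Rabs_le_between in H. nra. Qed.

Lemma lnFF_lip x y : Rabs (ln (FF y) - ln (FF x)) <= Rabs (y - x).
Proof.
  assert (forall x y, ln (FF y) - ln (FF x) <= Rabs (y - x)).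
  { intros a b. assert (H := FF_lip a b). apply ln_le in H; [|apply FF_pos].
    rewrite ln_mult, ln_exp in H; [lra|apply exp_pos|apply FF_pos]. }
  apply Rabs_le. split. assert (H1 := H y x). rewrite Rabs_minus_sym in H1. lra. apply H. Qed.

Lemma lnFF_cont x : continuity_pt (fun z => ln (FF z)) x.
Proof. apply (lip_cont _ _ 1). lra. intros y. rewrite Rmult_1_l. apply lnFF_lip. Qed.

Lemma holder t x y : 0 <= t <= 1 ->
  ln (FF (t * x + (1 - t) * y)) <= t * ln (FF x) + (1 - t) * ln (FF y).
Proof. intros Ht. set (A := FF x). set (B := FF y). set (z := t * x + (1 - t) * y).
  assert (HA : 0 < A) by apply FF_pos. assert (HB : 0 < B) by apply FF_pos.
  set (L := t * ln A + (1 - t) * ln B).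
  assert (Hle : exp (- L) * FF z <= 1).
  { assert (E0 : I (fun X => exp (-L) * EE z X) = exp (-L) * FF z) by (apply (I_scal n p I Hh), cs_EE).
    assert (E1 : I (fun X => t / A * EE x X) = t / A * A) by (apply (I_scal n p I Hh), cs_EE).
    assert (E2 : I (fun X => (1 - t) / B * EE y X) = (1 - t) / B * B) by (apply (I_scal n p I Hh), cs_EE).
    assert (E3 : I (fun X => t / A * EE x X + (1 - t) / B * EE y X) =
       I (fun X => t / A * EE x X) + I (fun X => (1 - t) / B * EE y X))
      by (apply (I_add n p I Hh); apply cs_scal, cs_EE).
    assert (M : I (fun X => exp (-L) * EE z X) <= I (fun X => t / A * EE x X + (1 - t) / B * EE y X)).
    { apply (I_mono n p I Hh). apply cs_scal, cs_EE.
      apply cs_plus; apply cs_scal, cs_EE.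
      intros X _. unfold EE, z.
      rewrite <- exp_plus.
      replace (- L + ((t * x + (1 - t) * y) * X 0%nat 0%nat + cc X)) with
        (t * (x * X 0%nat 0%nat + cc X - ln A) + (1 - t) * (y * X 0%nat 0%nat + cc X - ln B))
        by (unfold L; ring).
      eapply Rle_trans; [apply exp_convex; auto|].
      unfold Rminus at 1 3. rewrite !exp_plus, !exp_Ropp, !exp_ln; auto.
      right; field; lra. }
    rewrite E0, E3, E1, E2 in M. replace (t / A * A + (1 - t) / B * B) with 1 in M by (field; lra). exact M. }
  assert (Hz : 0 < FF z) by apply FF_pos.
  assert (exp (-L) * FF z = exp (ln (FF z) - L)).
  { unfold Rminus. rewrite Rplus_comm, exp_plus, exp_ln; auto. }
  rewrite H in Hle. rewrite <- exp_0 in Hle. apply exp_le_inv in Hle. lra. Qed.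

Lemma supermod m B y : m < B -> m <= y ->
  ln (FF y) + ln (FF B) <= ln (FF m) + ln (FF (y + B - m)).
Proof. intros HmB Hy. set (D := B - m). set (h := y - m).
  assert (HD : 0 < D) by (unfold D; lra).
  set (t := D / (D + h)).
  assert (Ht : 0 <= t <= 1).
  { unfold t. split. apply Rle_mult_inv_pos; unfold h; lra.
    apply Rmult_le_reg_r with (D + h). unfold h; lra. field_simplify; unfold h; lra. }
  assert (H1 := holder t m (y + B - m) Ht).
  assert (H2 := holder (1 - t) m (y + B - m) ltac:(lra)).
  replace (t * m + (1 - t) * (y + B - m)) with y in H1.
  replace ((1 - t) * m + (1 - (1 - t)) * (y + B - m)) with B in H2.
  lra.
  unfold t, D, h; field; lra. unfold t, D, h; field; lra. Qed.

End FF.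

Ltac eqbs := repeat match goal with |- context [Nat.eqb ?a ?b] => destruct (Nat.eqb_spec a b) end.

Definition Qf (i j : nat) : R := if Nat.eqb i j then (if Nat.eqb i 0 then -1 else 1) else 0.

Lemma Qf_orth n : orthogonal n Qf.
Proof. intros i j Hi Hj. rewrite (rsum_one n _ i); auto.
  unfold Qf; eqbs; try (exfalso; lia); lra.
  intros l Hl Hli. unfold Qf; eqbs; try (exfalso; lia); lra. Qed.

Lemma Qf_mmul n X : (0 < n)%nat -> mmul n Qf X 0%nat 0%nat = - X 0%nat 0%nat.
Proof. intros Hn. unfold mmul. rewrite (rsum_one n _ 0); auto.
  unfold Qf; simpl; ring. intros l Hl Hl0. unfold Qf; eqbs; try (exfalso; lia); lra. Qed.

Definition Rot (k : nat) (c s : R) (i j : nat) : R :=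
  if Nat.eqb i 0 then (if Nat.eqb j 0 then c else if Nat.eqb j k then s else 0)
  else if Nat.eqb i k then (if Nat.eqb j 0 then - s else if Nat.eqb j k then c else 0)
  else (if Nat.eqb i j then 1 else 0).

Lemma Rot_orth n k c s : (1 <= k)%nat -> (k < n)%nat -> c * c + s * s = 1 -> orthogonal n (Rot k c s).
Proof. intros Hk Hkn Hcs i j Hi Hj.
  destruct (Nat.eq_dec i 0) as [Ei|Ei]; [|destruct (Nat.eq_dec i k) as [Fi|Fi]].
  - rewrite (rsum_two n _ 0 k); try lia.
    unfold Rot; eqbs; try (exfalso; lia); nra.
    intros l Hl H0 H1. unfold Rot; eqbs; try (exfalso; lia); lra.
  - rewrite (rsum_two n _ 0 k); try lia.
    unfold Rot; eqbs; try (exfalso; lia); nra.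
    intros l Hl H0 H1. unfold Rot; eqbs; try (exfalso; lia); lra.
  - rewrite (rsum_one n _ i); try lia.
    unfold Rot; eqbs; try (exfalso; lia); nra.
    intros l Hl H0. unfold Rot; eqbs; try (exfalso; lia); lra. Qed.

Lemma Rot_mmul0 n k c s X : (1 <= k)%nat -> (k < n)%nat ->
  mmul n (Rot k c s) X 0%nat 0%nat = c * X 0%nat 0%nat + s * X k 0%nat.
Proof. intros Hk Hkn. unfold mmul. rewrite (rsum_two n _ 0 k); try lia.
  unfold Rot; eqbs; try (exfalso; lia); ring.
  intros l Hl H0 H1. unfold Rot; eqbs; try (exfalso; lia); lra. Qed.

Lemma Rot_mmuli n k c s X i : (1 <= k)%nat -> (k < n)%nat -> (i < n)%nat -> i <> 0%nat -> i <> k ->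
  mmul n (Rot k c s) X i 0%nat = X i 0%nat.
Proof. intros Hk Hkn Hi Hi0 Hik. unfold mmul. rewrite (rsum_one n _ i); try lia.
  unfold Rot; eqbs; try (exfalso; lia); ring.
  intros l Hl H0. unfold Rot; eqbs; try (exfalso; lia); lra. Qed.

Definition cst t := (1 - t * t) / (1 + t * t).
Definition snt t := 2 * t / (1 + t * t).

Lemma cst_snt t : cst t * cst t + snt t * snt t = 1.
Proof. unfold cst, snt. assert (0 < 1 + t * t) by nra. field; lra. Qed.

Lemma cst_dot a t : cst a * cst t + snt a * snt t = 1 - 2 * ((t - a) * (t - a)) / ((1 + t * t) * (1 + a * a)).
Proof. unfold cst, snt. assert (0 < 1 + t * t) by nra. assert (0 < 1 + a * a) by nra.
  field; lra. Qed.

Lemma choose_j t (N : nat) : -1 <= t <= 1 -> (1 <= N)%nat ->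
  exists j, (j <= 2 * N)%nat /\ Rabs (t - (INR j / INR N - 1)) <= 1 / INR N.
Proof. intros Ht HN. assert (HNr : 1 <= INR N) by (apply (le_INR 1); auto).
  set (y := INR N * (t + 1)).
  assert (Hy : 0 <= y <= 2 * INR N) by (unfold y; nra).
  destruct (archimed y) as [A1 A2].
  set (z := (up y - 1)%Z).
  assert (Hz : IZR z = IZR (up y) - 1) by (unfold z; rewrite minus_IZR; auto).
  assert (Hz0 : (0 <= z)%Z). { assert (0 < up y)%Z by (apply lt_IZR; lra). unfold z; lia. }
  exists (Z.to_nat z). rewrite INR_IZR_INZ, Z2Nat.id; auto. split.
  - apply INR_le. rewrite INR_IZR_INZ, Z2Nat.id, mult_INR; auto. simpl (INR 2). lra.
  - replace (t - (IZR z / INR N - 1)) with ((y - IZR z) / INR N) by (unfold y; field; lra).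
    unfold Rdiv. rewrite Rabs_mult, Rabs_inv, (Rabs_right (INR N)) by lra.
    apply Rmult_le_compat_r. left; apply Rinv_0_lt_compat; lra.
    apply Rabs_le; lra. Qed.

Lemma cover_pos u w (N : nat) : 0 <= u -> (1 <= N)%nat ->
  exists j, (j <= 2 * N)%nat /\
   cst (INR j / INR N - 1) * u + snt (INR j / INR N - 1) * w >=
   (1 - 2 / (INR N * INR N)) * sqrt (u * u + w * w).
Proof. intros Hu HN. assert (HNr : 1 <= INR N) by (apply (le_INR 1); auto).
  set (r := sqrt (u * u + w * w)).
  assert (Hr2 : r * r = u * u + w * w) by (apply sqrt_sqrt; nra).
  assert (Hr0 : 0 <= r) by apply sqrt_pos.
  destruct (Req_dec (r + u) 0) as [E|E].
  - exists 0%nat. split; [lia|]. assert (r = 0) by lra. assert (u = 0) by lra.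
    assert (w = 0) by nra. subst. rewrite H. lra.
  - assert (Hru : 0 < r + u) by lra.
    assert (Hwr : w * w <= r * r) by nra.
    set (t := w / (r + u)).
    assert (Ht : -1 <= t <= 1).
    { unfold t. assert (Rabs w <= r + u).
      { apply Rsqr_incr_0_var. unfold Rsqr. rewrite <- Rabs_mult, Rabs_right by nra. nra. lra. }
      apply Rabs_le_between in H. split.
      apply Rmult_le_reg_r with (r + u); auto. field_simplify; lra.
      apply Rmult_le_reg_r with (r + u); auto. field_simplify; lra. }
    destruct (choose_j t N Ht HN) as [j [Hj Hd]]. exists j. split; auto.
    set (a := INR j / INR N - 1). fold a in Hd.
    assert (Ecu : u = r * cst t).
    { unfold cst, t. assert (0 < r) by nra. field_simplify_eq; try nra. }
    assert (Esw : w = r * snt t).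
    { unfold snt, t. assert (0 < r) by nra. assert (w * (r * r) = w * (u * u + w * w)) by (rewrite Hr2; auto). field_simplify_eq; try nra. }
    assert (cst a * u + snt a * w = r * (cst a * cst t + snt a * snt t)) by (rewrite Ecu, Esw at 1; ring).
    rewrite H, cst_dot. fold r.
    assert (Hd2 : (t - a) * (t - a) <= 1 / INR N * (1 / INR N)).
    {       assert (0 <= Rabs (t - a)) by apply Rabs_pos.
      assert ((t - a) * (t - a) = Rabs (t - a) * Rabs (t - a)) by (unfold Rabs; destruct (Rcase_abs (t - a)); ring).
      rewrite H1. apply Rmult_le_compat; auto. }
    assert (Hden : 1 <= (1 + t * t) * (1 + a * a)) by nra.
    assert (2 * ((t - a) * (t - a)) / ((1 + t * t) * (1 + a * a)) <= 2 / (INR N * INR N)).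
    { apply Rle_trans with (2 * ((t - a) * (t - a))).
      apply Rmult_le_reg_r with ((1 + t * t) * (1 + a * a)); [lra|].
      replace (2 * ((t - a) * (t - a)) / ((1 + t * t) * (1 + a * a)) * ((1 + t * t) * (1 + a * a)))
        with (2 * ((t - a) * (t - a))) by (field; split; nra).
      assert (0 <= 2 * ((t - a) * (t - a))) by (pose proof (Rle_0_sqr (t - a)); unfold Rsqr in *; lra).
      assert (2 * ((t - a) * (t - a)) * 1 <= 2 * ((t - a) * (t - a)) * ((1 + t * t) * (1 + a * a))) by (apply Rmult_le_compat_l; lra). lra.
      replace (2 / (INR N * INR N)) with (2 * (1 / INR N * (1 / INR N))) by (field; lra). lra. }
    apply Rle_ge. rewrite (Rmult_comm _ r). apply Rmult_le_compat_l; lra. Qed.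

Lemma cover u w (N : nat) : (1 <= N)%nat ->
  exists j (sg : R), (j <= 2 * N)%nat /\ (sg = 1 \/ sg = -1) /\
   (sg * cst (INR j / INR N - 1)) * u + (sg * snt (INR j / INR N - 1)) * w >=
   (1 - 2 / (INR N * INR N)) * sqrt (u * u + w * w).
Proof. intros HN. destruct (Rle_dec 0 u).
  - destruct (cover_pos u w N r HN) as [j [Hj H]]. exists j, 1. split; auto. split; auto. lra.
  - destruct (cover_pos (- u) (- w) N ltac:(lra) HN) as [j [Hj H]]. exists j, (-1). split; auto. split; auto.
    replace (- u * - u + - w * - w) with (u * u + w * w) in H by ring. lra. Qed.

Definition SS k (X : Mat) := rsum k (fun i => X i 0%nat * X i 0%nat).
Definition phi a k (X : Mat) := exp (a * sqrt (SS (S k) X)).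

Lemma rsum_const k c : rsum k (fun _ => c) = INR k * c.
Proof. induction k. simpl; ring. change (rsum (S k) (fun _ => c)) with (rsum k (fun _ => c) + c).
  rewrite IHk, S_INR; ring. Qed.

Lemma rsum_tail k f g : (forall i, (1 <= i)%nat -> (i < S k)%nat -> f i = g i) ->
  rsum (S k) f - f 0%nat = rsum (S k) g - g 0%nat.
Proof. induction k; intros H. simpl; ring.
  change (rsum (S (S k)) f) with (rsum (S k) f + f (S k)).
  change (rsum (S (S k)) g) with (rsum (S k) g + g (S k)).
  rewrite (H (S k)) by lia. assert (A := IHk (fun i H1 H2 => H i H1 ltac:(lia))). lra. Qed.

Lemma SS_ge0 k X : 0 <= SS k X.
Proof. apply rsum_nonneg. intros; nra. Qed.

Lemma SS_tail_ge0 k X : 0 <= SS (S k) X - X 0%nat 0%nat * X 0%nat 0%nat.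
Proof. assert (X 0%nat 0%nat * X 0%nat 0%nat <= SS (S k) X).
  apply (rsum_le_term (S k) (fun i => X i 0%nat * X i 0%nat)); [intros; nra|lia]. lra. Qed.

Section Growth.
Variables (n p : nat) (I : (Mat -> R) -> R).
Hypothesis Hh : is_haar_integral n p I.
Hypothesis Hp1 : (1 <= p)%nat.
Hypothesis Hpn : (p <= n)%nat.

Lemma cs_phi_gen a k (Y : Mat -> Mat) : (forall i, (i < k)%nat -> cs n p (fun X => Y X i 0%nat)) ->
  cs n p (fun X => exp (a * sqrt (SS k (Y X)))).
Proof. intros H. apply cs_exp. apply cs_scal.
  apply (cs_comp n p sqrt (fun X => SS k (Y X))).
  unfold SS. apply (cs_rsum n p k (fun i X => Y X i 0%nat * Y X i 0%nat)).
  intros i Hi. apply cs_sqr. apply H; auto.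
  intros X _. apply continuity_pt_sqrt. apply SS_ge0. Qed.

Lemma cs_phi a k : (S k <= n)%nat -> cs n p (phi a k).
Proof. intros Hk. apply (cs_phi_gen a (S k) (fun X => X)). intros i Hi. apply cs_entry; lia. Qed.

Lemma cs_phi_Q a k Q : cs n p (fun X => phi a k (mmul n Q X)).
Proof. apply (cs_phi_gen a (S k) (fun X => mmul n Q X)). intros i Hi. unfold mmul.
  apply (cs_rsum n p n (fun l X => Q i l * X l 0%nat)). intros l Hl. apply cs_scal, cs_entry; lia. Qed.

Variable N : nat.
Hypothesis HN : (1 <= N)%nat.
Let gam := 1 - 2 / (INR N * INR N).
Hypothesis Hgam : 0 <= gam.
Let MM := 2 * INR (S (2 * N)).

Lemma gam_le1 : gam <= 1.
Proof. unfold gam. assert (1 <= INR N) by (apply (le_INR 1); auto).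
  assert (0 < 2 / (INR N * INR N)) by (apply Rdiv_lt_0_compat; nra). lra. Qed.

Lemma pt_step a k (X : Mat) c s : (S (S k) <= n)%nat -> 0 <= a ->
  c * X 0%nat 0%nat + s * X (S k) 0%nat >= gam * sqrt (X 0%nat 0%nat * X 0%nat 0%nat + X (S k) 0%nat * X (S k) 0%nat) ->
  phi (a * gam) (S k) X <= phi a k (mmul n (Rot (S k) c s) X).
Proof. intros Hk Ha Hc. unfold phi. apply exp_le_inc.
  set (Y := mmul n (Rot (S k) c s) X).
  assert (E1 : SS (S k) Y - Y 0%nat 0%nat * Y 0%nat 0%nat = SS (S k) X - X 0%nat 0%nat * X 0%nat 0%nat).
  { unfold SS. apply (rsum_tail k (fun i => Y i 0%nat * Y i 0%nat) (fun i => X i 0%nat * X i 0%nat)).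
    intros i H1 H2. unfold Y. rewrite Rot_mmuli; auto; lia. }
  assert (E2 : Y 0%nat 0%nat = c * X 0%nat 0%nat + s * X (S k) 0%nat) by (unfold Y; apply Rot_mmul0; lia).
  assert (E3 : SS (S (S k)) X = SS (S k) X + X (S k) 0%nat * X (S k) 0%nat) by reflexivity.
  set (u := X 0%nat 0%nat) in *. set (w := X (S k) 0%nat) in *.
  set (R0 := sqrt (u * u + w * w)) in *.
  assert (HR0 : 0 <= R0) by apply sqrt_pos.
  assert (HR2 : R0 * R0 = u * u + w * w) by (apply sqrt_sqrt; nra).
  assert (Ht := SS_tail_ge0 k X). fold u in Ht.
  assert (G1 := gam_le1).
  set (v := Y 0%nat 0%nat) in *.
  assert (Hv : gam * R0 <= v) by lra.
  assert (Hv2 : (gam * R0) * (gam * R0) <= v * v) by (apply Rmult_le_compat; nra).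
  assert (HS : (gam * gam) * SS (S (S k)) X <= SS (S k) Y).
  { rewrite E3. assert (SS (S k) Y = v * v + (SS (S k) X - u * u)) by lra.
    rewrite H. assert (0 <= gam * gam) by nra. assert (gam * gam <= 1) by nra.
    assert (gam * gam * (SS (S k) X - u * u) <= SS (S k) X - u * u).
    { rewrite <- (Rmult_1_l (SS (S k) X - u * u)) at 2. apply Rmult_le_compat_r; lra. }
    nra. }
  assert (sqrt ((gam * gam) * SS (S (S k)) X) <= sqrt (SS (S k) Y)) by (apply sqrt_le_1_alt; auto).
  rewrite sqrt_mult_alt, sqrt_square in H by nra.
  rewrite Rmult_assoc. apply Rmult_le_compat_l; auto. Qed.

Lemma I_step a k : (S (S k) <= n)%nat -> 0 <= a ->
  I (phi (a * gam) (S k)) <= MM * I (phi a k).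
Proof. intros Hk Ha.
  set (tj := fun j => INR j / INR N - 1).
  set (F := fun j X => phi a k (mmul n (Rot (S k) (cst (tj j)) (snt (tj j))) X)
                      + phi a k (mmul n (Rot (S k) (-1 * cst (tj j)) (-1 * snt (tj j))) X)).
  assert (csF : forall j, cs n p (F j)) by (intros j; unfold F; apply cs_plus; apply cs_phi_Q).
  assert (IF : forall j, I (F j) = 2 * I (phi a k)).
  { intros j. unfold F. rewrite (I_add n p I Hh); try apply cs_phi_Q.
    rewrite !(I_inv n p I Hh); try apply cs_phi; try lia.
    ring. apply Rot_orth; try lia. assert (Hc := cst_snt (tj j)). nra.
    apply Rot_orth; try lia. apply cst_snt. }
  apply Rle_trans with (I (fun X => rsum (S (2 * N)) (fun j => F j X))).
  - apply (I_mono n p I Hh). apply cs_phi; lia. apply cs_rsum; auto.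
    intros X _. destruct (cover (X 0%nat 0%nat) (X (S k) 0%nat) N HN) as [j [sg [Hj [Hsg Hc]]]].
    assert (Hnn : forall i, (i < S (2 * N))%nat -> 0 <= F i X).
    { intros i _. unfold F, phi. assert (A := exp_pos (a * sqrt (SS (S k) (mmul n (Rot (S k) (cst (tj i)) (snt (tj i))) X)))).
      assert (B := exp_pos (a * sqrt (SS (S k) (mmul n (Rot (S k) (-1 * cst (tj i)) (-1 * snt (tj i))) X)))). lra. }
    eapply Rle_trans; [|apply (rsum_le_term (S (2 * N)) (fun j => F j X) j Hnn); lia].
    unfold F. fold (tj j) in Hc.
    assert (P1 : 0 < phi a k (mmul n (Rot (S k) (cst (tj j)) (snt (tj j))) X)) by apply exp_pos.
    assert (P2 : 0 < phi a k (mmul n (Rot (S k) (-1 * cst (tj j)) (-1 * snt (tj j))) X)) by apply exp_pos.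
    destruct Hsg; subst sg.
    + assert (phi (a * gam) (S k) X <= phi a k (mmul n (Rot (S k) (cst (tj j)) (snt (tj j))) X)).
      { apply pt_step; auto. unfold gam; lra. } lra.
    + assert (phi (a * gam) (S k) X <= phi a k (mmul n (Rot (S k) (-1 * cst (tj j)) (-1 * snt (tj j))) X)).
      { apply pt_step; auto. } lra.
  - rewrite (I_rsum n p I Hh); auto. rewrite (rsum_ext _ _ (fun _ => 2 * I (phi a k))).
    rewrite rsum_const. unfold MM. right; ring. intros; auto. Qed.

Lemma I_top b : I (phi b (n - 1)) >= exp b.
Proof. apply Rle_ge. rewrite <- (I_const n p I Hh (exp b)). apply (I_mono n p I Hh).
  apply cs_const. apply cs_phi; lia. intros X HX. unfold phi.
  replace (S (n - 1)) with n by lia.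
  assert (SS n X = 1). { unfold SS. assert (A := HX 0%nat 0%nat ltac:(lia) ltac:(lia)). simpl in A. auto. }
  rewrite H, sqrt_1, Rmult_1_r. lra. Qed.

Lemma I_chain x : 0 <= x -> forall j k, (k + j = n - 1)%nat ->
  I (phi (x * gam ^ k) k) >= exp (x * gam ^ (n - 1)) / MM ^ j.
Proof. intros Hx j. assert (HM : 0 < MM) by (unfold MM; assert (A := pos_INR (2*N)); rewrite S_INR; lra).
  induction j; intros k Hk.
  - replace k with (n - 1)%nat by lia. simpl. unfold Rdiv; rewrite Rinv_1, Rmult_1_r. apply I_top.
  - assert (A := IHj (S k) ltac:(lia)).
    assert (B := I_step (x * gam ^ k) k ltac:(lia) ltac:(apply Rmult_le_pos; auto; apply pow_le; auto)).
    replace (x * gam ^ k * gam) with (x * gam ^ S k) in B by (simpl; ring).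
    apply Rle_ge. apply Rmult_le_reg_l with MM; auto.
    replace (MM * (exp (x * gam ^ (n - 1)) / MM ^ S j)) with (exp (x * gam ^ (n - 1)) / MM ^ j)
      by (simpl; field; split; [apply pow_nonzero|]; lra).
    lra. Qed.

Lemma G_lower x : 0 <= x ->
  exp (x * gam ^ (n - 1)) / MM ^ (n - 1) <= 2 * I (fun X => exp (x * X 0%nat 0%nat)).
Proof. intros Hx. assert (A := I_chain x Hx (n - 1) 0 ltac:(lia)).
  simpl (gam ^ 0) in A. eapply Rle_trans; [apply Rge_le, A|].
  assert (cse : cs n p (fun X => exp (x * X 0%nat 0%nat))).
  { apply cs_exp, cs_scal, cs_entry; lia. }
  assert (E : I (fun X => exp (x * X 0%nat 0%nat)) = I (fun X => exp ((- x) * X 0%nat 0%nat))).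
  { rewrite <- (I_inv n p I Hh _ Qf cse (Qf_orth n)). f_equal. extensionality X.
    rewrite Qf_mmul; [f_equal; ring|lia]. }
  replace (2 * I (fun X => exp (x * X 0%nat 0%nat))) with
    (I (fun X => exp (x * X 0%nat 0%nat) + exp ((- x) * X 0%nat 0%nat))).
  2:{ rewrite (I_add n p I Hh); auto. rewrite <- E; ring. apply cs_exp, cs_scal, cs_entry; lia. }
  apply (I_mono n p I Hh). apply cs_phi; lia. apply cs_plus; auto. apply cs_exp, cs_scal, cs_entry; lia.
  intros X _. unfold phi, SS. simpl rsum. rewrite Rplus_0_l, Rmult_1_r.
  change (X 0%nat 0%nat * X 0%nat 0%nat) with (Rsqr (X 0%nat 0%nat)). rewrite sqrt_Rsqr_abs.
  assert (0 < exp (x * X 0%nat 0%nat)) by apply exp_pos.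
  assert (0 < exp ((- x) * X 0%nat 0%nat)) by apply exp_pos.
  unfold Rabs. destruct (Rcase_abs _); [replace (x * - X 0%nat 0%nat) with ((- x) * X 0%nat 0%nat) by ring|]; lra. Qed.
End Growth.

Lemma bernoulli q k : 0 <= q <= 1 -> 1 - INR k * q <= (1 - q) ^ k.
Proof. intros Hq. induction k. simpl; lra.
  rewrite S_INR. simpl. assert (A := pow_le (1 - q) k ltac:(lra)).
  destruct (Rle_dec 0 (1 - INR k * q)).
  - assert ((1 - INR k * q) * (1 - q) <= (1 - q) * (1 - q) ^ k).
    { rewrite Rmult_comm. apply Rmult_le_compat_l; lra. }
    assert (0 <= INR k * q * q) by (apply Rmult_le_pos; [apply Rmult_le_pos; [apply pos_INR|]|]; lra).
    nra.
  - assert (0 <= (1 - q) * (1 - q) ^ k) by (apply Rmult_le_pos; lra). lra. Qed.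

Lemma FF_growth n p I d : is_haar_integral n p I -> (1 <= p)%nat -> (p <= n)%nat ->
  forall eta0, eta0 < 1 -> exists th kap, eta0 < th /\ 0 < kap /\
   forall x, 0 <= x -> kap * exp (th * x) <= FF p I d x.
Proof. intros Hh Hp1 Hpn eta0 He.
  set (del := Rmin 1 ((1 - eta0) / (INR n + 1))).
  assert (Hn0 : 0 <= INR n) by apply pos_INR.
  assert (Hdel : 0 < del) by (apply Rmin_pos; [lra|apply Rdiv_lt_0_compat; lra]).
  destruct (INR_unbounded (2 / del)) as [N0 HN0].
  set (N := S N0). assert (HN : (1 <= N)%nat) by (unfold N; lia).
  assert (HNr : INR N > 2 / del) by (unfold N; rewrite S_INR; lra).
  assert (HN1 : 1 <= INR N) by (apply (le_INR 1); auto).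
  set (q := 2 / (INR N * INR N)).
  assert (Hq0 : 0 < q) by (apply Rdiv_lt_0_compat; nra).
  assert (Hqd : q < del).
  { unfold q. apply Rle_lt_trans with (2 / INR N).
    unfold Rdiv. apply Rmult_le_compat_l; [lra|]. apply Rinv_le_contravar; nra.
    apply Rmult_lt_reg_r with (INR N / del). apply Rdiv_lt_0_compat; lra.
    replace (2 / INR N * (INR N / del)) with (2 / del) by (field; lra).
    replace (del * (INR N / del)) with (INR N) by (field; lra). lra. }
  assert (Hdel1 : del <= 1) by apply Rmin_l.
  assert (Hdel2 : del <= (1 - eta0) / (INR n + 1)) by apply Rmin_r.
  assert (Hgam : 0 <= 1 - q) by lra.
  set (gam := 1 - q).
  set (MM := 2 * INR (S (2 * N))).
  assert (HM : 0 < MM) by (unfold MM; assert (A := pos_INR (2*N)); rewrite S_INR; lra).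
  exists (gam ^ (n - 1)), (exp (- KK p d) / 2 / MM ^ (n - 1)). split; [|split].
  - assert (B := bernoulli q (n - 1) ltac:(lra)). fold gam in B.
    assert (INR (n - 1) <= INR n) by (apply le_INR; lia).
    assert (0 <= INR (n - 1)) by apply pos_INR.
    assert (INR (n - 1) * q <= INR (n - 1) * ((1 - eta0) / (INR n + 1))) by (apply Rmult_le_compat_l; lra).
    assert (INR (n - 1) * ((1 - eta0) / (INR n + 1)) < 1 - eta0).
    { apply Rmult_lt_reg_r with (INR n + 1). lra.
      replace (INR (n - 1) * ((1 - eta0) / (INR n + 1)) * (INR n + 1)) with (INR (n - 1) * (1 - eta0)) by (field; lra).
      nra. }
    lra.
  - apply Rdiv_lt_0_compat; [|apply pow_lt; auto]. assert (A := exp_pos (- KK p d)). lra.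
  - intros x Hx.
    assert (G := G_lower n p I Hh Hp1 Hpn N HN Hgam x Hx). fold q gam MM in G.
    assert (L : exp (- KK p d) * I (fun X => exp (x * X 0%nat 0%nat)) <= FF p I d x).
    { unfold FF. rewrite <- (I_scal n p I Hh); [|apply cs_exp, cs_scal, cs_entry; lia].
      apply (I_mono n p I Hh). apply cs_scal, cs_exp, cs_scal, cs_entry; lia.
      apply cs_EE; auto. intros X HX. unfold EE. rewrite <- exp_plus. apply exp_le_inc.
      assert (A := cc_bound n p d Hp1 Hpn X HX). apply Rabs_le_between in A. lra. }
    assert (A := exp_pos (- KK p d)).
    replace (exp (- KK p d) / 2 / MM ^ (n - 1) * exp (gam ^ (n - 1) * x)) with
       (exp (- KK p d) / 2 * (exp (x * gam ^ (n - 1)) / MM ^ (n - 1))).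
    2:{ rewrite Rmult_comm with (r1 := gam ^ (n-1)). field. apply pow_nonzero; lra. }
    apply Rle_trans with (exp (- KK p d) / 2 * (2 * I (fun X => exp (x * X 0%nat 0%nat)))).
    apply Rmult_le_compat_l; lra. lra. Qed.

Lemma exR f a b : a <= b -> (forall x, continuity_pt f x) -> ex_RInt f a b.
Proof. intros Hab Hc. apply ex_RInt_Reals_1. apply continuity_implies_RiemannInt; auto. Qed.

Lemma RInt_exp_bound C s a b : 0 < s -> a <= b ->
  RInt (fun x => C * exp (- s * x)) a b = C / s * (exp (- s * a) - exp (- s * b)).
Proof. intros Hs Hab. apply is_RInt_unique.
  assert (H := is_RInt_derive (fun x => - C / s * exp (- s * x)) (fun x => C * exp (- s * x)) a b).
  replace (C / s * (exp (- s * a) - exp (- s * b))) with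
    (minus (- C / s * exp (- s * b)) (- C / s * exp (- s * a))).
  apply H.
  - intros x _. auto_derive; auto. field; lra.
  - intros x _. apply continuity_pt_filterlim. apply (cpt_of_derive (fun x => C * exp (- s * x))). auto_derive; auto.
  - unfold minus, plus, opp; simpl. field; lra. Qed.

Lemma RInt_mono_b f a b c : (forall x, continuity_pt f x) -> (forall x, 0 <= f x) -> a <= b -> b <= c ->
  RInt f a b <= RInt f a c.
Proof. intros Hc Hp Hab Hbc. rewrite <- (RInt_Chasles f a b c); try apply exR; auto.
  assert (0 <= RInt f b c) by (apply RInt_ge_0; auto; apply exR; auto).
  change (plus (RInt f a b) (RInt f b c)) with (RInt f a b + RInt f b c). lra. Qed.

Lemma improper_exists f a C s : 0 <= a -> 0 < s -> (forall x, continuity_pt f x) -> (forall x, 0 <= f x) ->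
  (forall x, 0 <= x -> f x <= C * exp (- s * x)) ->
  exists l, improper_int f a l /\ (forall b, a <= b -> RInt f a b <= l).
Proof. intros Ha Hs Hc Hp Hb.
  set (E := fun v => exists b, a <= b /\ v = RInt f a b).
  assert (HC : 0 <= C). { assert (A := Hb 0 (Rle_refl 0)). assert (B := Hp 0). assert (D := exp_pos (- s * 0)). nra. }
  assert (Hbd : bound E).
  { exists (C / s * exp (- s * a)). intros v [b [Hab ->]].
    apply Rle_trans with (RInt (fun x => C * exp (- s * x)) a b).
    apply RInt_le; auto. apply exR; auto. apply exR; auto. intros; apply cpt_of_derive; auto_derive; auto.
    intros x Hx; apply Hb; lra.
    rewrite RInt_exp_bound; auto. assert (A := exp_pos (- s * b)).
    assert (0 <= C / s) by (apply Rle_mult_inv_pos; lra).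
    assert (C / s * exp (- s * b) >= 0) by (apply Rle_ge, Rmult_le_pos; lra). nra. }
  destruct (completeness E Hbd (ex_intro _ (RInt f a a) (ex_intro _ a (conj (Rle_refl a) eq_refl)))) as [l [Hub Hlub]].
  exists l. split.
  - exists (fun b h => continuity_implies_RiemannInt h (fun x _ => Hc x)).
    intros eps He.
    assert (exists b0, a <= b0 /\ l - eps < RInt f a b0).
    { apply Classical_Prop.NNPP. intros Hn. assert (l <= l - eps); [|lra].
      apply Hlub. intros v [b [Hab ->]]. apply Rnot_lt_le. intros Hlt. apply Hn. exists b; auto. }
    destruct H as [b0 [Hb0 Hlt]]. exists b0. intros b h Hb0b.
    rewrite <- RInt_Reals.
    assert (RInt f a b0 <= RInt f a b) by (apply RInt_mono_b; auto).
    assert (RInt f a b <= l) by (apply Hub; exists b; auto).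
    apply Rabs_lt_between'. lra.
  - intros b Hab. apply Hub. exists b; auto. Qed.

Theorem lemma11 (n p : nat) (I : (Mat -> R) -> R) (nu : R) (eta d : nat -> R)
  (m B eps : R) :
  (1 <= p)%nat -> (p <= n)%nat ->
  is_haar_integral n p I ->
  0 < nu ->
  (forall j, (j < p)%nat -> eta j < 1) ->
  (forall j, (1 <= j)%nat -> (j < p)%nat -> 0 < d j) ->
  (* m is the mode of g1 on R_+ *)
  0 <= m -> (forall x, 0 <= x -> g1 n p I nu eta d x <= g1 n p I nu eta d m) ->
  0 < eps -> m < B ->
  g1 n p I nu eta d B / g1 n p I nu eta d m < eps ->
  exists Z T,
    improper_int (g1 n p I nu eta d) 0 Z /\
    improper_int (g1 n p I nu eta d) B T /\
    T / Z < eps.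
Proof.
  intros Hp1 Hpn Hh Hnu Heta Hd Hm0 Hmode Heps HmB Hrat.
  set (L := fun x => ln (FF p I d x)).
  set (e0 := eta 0%nat).
  set (gg := fun x => exp (nu * e0 * x - nu * L x)).
  assert (Eg : g1 n p I nu eta d = gg).
  { extensionality x. unfold g1, gg, L, Rpower. rewrite (hyp_FF n p I d Hh Hp1 Hpn).
    unfold Rminus. rewrite exp_plus, exp_Ropp. reflexivity. }
  rewrite Eg in *.
  assert (Hpos : forall x, 0 < gg x) by (intros; apply exp_pos).
  assert (Hcont : forall x, continuity_pt gg x).
  { intros x. unfold gg. apply (continuity_pt_comp (fun z => nu * e0 * z - nu * L z) exp).
    apply (lip_cont _ _ (nu * (Rabs e0 + 1))). assert (0 <= Rabs e0) by apply Rabs_pos. nra.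
    intros y. assert (A := lnFF_lip n p I d Hh Hp1 Hpn x y). fold (L x) (L y) in A.
    replace (nu * e0 * y - nu * L y - (nu * e0 * x - nu * L x)) with
      (nu * (e0 * (y - x)) + (- nu) * (L y - L x)) by ring.
    eapply Rle_trans; [apply Rabs_triang|]. rewrite !Rabs_mult, (Rabs_right nu), Rabs_Ropp, (Rabs_right nu) by lra.
    assert (0 <= Rabs (y - x)) by apply Rabs_pos. nra.
    apply cpt_of_derive. auto_derive; auto. }
  destruct (FF_growth n p I d Hh Hp1 Hpn e0 (Heta 0%nat ltac:(lia))) as [th [kap [Hth [Hkap Hgr]]]].
  set (C := exp (- nu * ln kap)). set (s := nu * (th - e0)).
  assert (Hs : 0 < s) by (unfold s; apply Rmult_lt_0_compat; lra).
  assert (Hdec : forall x, 0 <= x -> gg x <= C * exp (- s * x)).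
  { intros x Hx. unfold C, gg. rewrite <- exp_plus. apply exp_le_inc.
    assert (A := Hgr x Hx). apply ln_le in A; [|apply Rmult_lt_0_compat; auto; apply exp_pos].
    rewrite ln_mult, ln_exp in A; auto; [|apply exp_pos]. fold (L x) in A. unfold s. nra. }
  assert (Hnn : forall x, 0 <= gg x) by (intros; left; auto).
  destruct (improper_exists gg 0 C s (Rle_refl 0) Hs Hcont Hnn Hdec) as [Z [HZ HZb]].
  destruct (improper_exists gg B C s ltac:(lra) Hs Hcont Hnn Hdec) as [T [HT HTb]].
  exists Z, T. split; auto. split; auto.
  set (r := gg B / gg m).
  assert (Hr0 : 0 < r) by (apply Rdiv_lt_0_compat; auto).
  assert (Hsh : forall y, m <= y -> gg (y + (B - m)) <= r * gg y).
  { intros y Hy. assert (A := supermod n p I d Hh Hp1 Hpn m B y HmB Hy).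
    unfold r. apply Rmult_le_reg_r with (gg m); auto.
    replace (gg B / gg m * gg y * gg m) with (gg B * gg y) by (field; apply Rgt_not_eq, Hpos).
    unfold gg. rewrite <- !exp_plus. apply exp_le_inc. fold (L y) (L B) (L m) in A.
    replace (y + (B - m)) with (y + B - m) by ring. fold (L (y + B - m)) in A. nra. }
  assert (HZpos : 0 < Z).
  { apply Rlt_le_trans with (RInt gg 0 1). apply RInt_gt_0. lra. intros; auto.
    intros x _. apply continuity_pt_filterlim, Hcont. apply HZb; lra. }
  assert (HTb2 : forall b, B <= b -> RInt gg B b <= r * Z).
  { intros b Hb. set (b' := b - B + m).
    assert (Hex : ex_RInt gg (1 * m + (B - m)) (1 * b' + (B - m))) by (apply exR; [unfold b'; lra|auto]).
    assert (A := RInt_comp_lin gg 1 (B - m) m b' Hex).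
    replace (1 * m + (B - m)) with B in A by ring. replace (1 * b' + (B - m)) with b in A by (unfold b'; ring).
    assert (E1 : RInt gg B b = RInt (fun y => gg (y + (B - m))) m b').
    { rewrite <- A. apply RInt_ext. intros x _.
      change (scal 1 (gg (1 * x + (B - m)))) with (1 * gg (1 * x + (B - m))). rewrite !Rmult_1_l. auto. }
    rewrite E1.
    assert (Hc2 : forall x, continuity_pt (fun y => gg (y + (B - m))) x).
    { intros x. apply (continuity_pt_comp (fun y => y + (B - m)) gg). apply cpt_of_derive; auto_derive; auto. apply Hcont. }
    assert (Hc3 : forall x, continuity_pt (fun y => r * gg y) x).
    { intros x. apply (continuity_pt_comp gg (fun z => r * z)). apply Hcont. apply cpt_of_derive; auto_derive; auto. }
    assert (Hbm : m <= b') by (unfold b'; lra).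
    apply Rle_trans with (RInt (fun y => r * gg y) m b').
    apply RInt_le; auto; try (apply exR; auto). intros x Hx. apply Hsh; lra.
    assert (E2 : RInt (fun y => r * gg y) m b' = r * RInt gg m b').
    { assert (A2 := RInt_scal gg m b' r (exR gg m b' Hbm Hcont)). exact A2. }
    rewrite E2. apply Rmult_le_compat_l; [lra|].
    apply Rle_trans with (RInt gg 0 b').
    rewrite <- (RInt_Chasles gg 0 m b'); try (apply exR; auto).
    assert (0 <= RInt gg 0 m) by (apply RInt_ge_0; auto; apply exR; auto).
    change (plus (RInt gg 0 m) (RInt gg m b')) with (RInt gg 0 m + RInt gg m b'). lra.
    apply HZb; lra. }
  assert (HTr : T <= r * Z).
  { apply Rnot_lt_le. intros Hlt. destruct HT as [pr Hpr].
    destruct (Hpr (T - r * Z) ltac:(lra)) as [M HM].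
    assert (hB : B <= Rmax M B) by apply Rmax_r.
    assert (A := HM (Rmax M B) hB (Rmax_l M B)). rewrite <- RInt_Reals in A.
    assert (A2 := HTb2 (Rmax M B) hB). apply Rabs_lt_between' in A. lra. }
  apply Rle_lt_trans with r; auto.
  apply Rmult_le_reg_r with Z; auto. unfold Rdiv. rewrite Rmult_assoc, Rinv_l; lra.
Qed.
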